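(* For $0\le k\le n$, $B(n,k)$ equals the number of snakes $\pi=\pi_1\cdots\pi_n$ of type $B_n$ with $\alpha(\pi)=k$, where $$\alpha(\pi)=\#\{j \text{ odd}:\pi_j>0\}+\#\{j\text{ even}:\pi_j<0\}-\#\{j\text{ odd}:\pi_j<0\}-\#\{j\text{ even}:\pi_j>0\},$$ $j$ ranging over $\{1,\dots,n\}$.
   Context: A signed permutation of $[n]$ is a permutation of $[n]$ with some entries negated ($\bar i=-i$), ordered by $\bar n<\cdots<\bar1<1<\cdots<n$. A snake of type $B_n$ is a signed permutation with $0<\pi_1>\pi_2<\pi_3>\pi_4<\cdots\pi_n$. A labeled ballot path is a lattice path from $(0,0)$ with steps $u=(1,1)$, $d=(1,-1)$ never going below the $x$-axis, each step carrying an integer label between $0$ and its height, where the height of a step is the smaller $y$-coordinate of its endpoints. $B(n,k)$ is the number of labeled ballot paths from $(0,0)$ ending at $(n,k)$. *)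

(* Defs.v *)
From HB Require Import structures.
From mathcomp Require Import all_boot all_order all_algebra all_fingroup.
Set Implicit Arguments. Unset Strict Implicit. Unset Printing Implicit Defensive.
Import Order.TTheory GRing.Theory Num.Theory.
Local Open Scope ring_scope.

(* A signed permutation of [n] is encoded by a pair (s, e) with s : 'S_n a
   permutation of {0..n-1} and e : 'I_n -> bool a choice of signs; the
   j-th entry (0-based position j) is  pi_j = (-1)^(e j) * (s j + 1).
   This is a bijection onto signed permutations of [n], whose entries are
   integers, ordered by the usual order of int:  -n < ... < -1 < 1 < ... < n. *)
Definition signed_perm (n : nat) := ('S_n * {ffun 'I_n -> bool})%type.

Definition sp_entry (n : nat) (p : signed_perm n) (j : 'I_n) : int :=
  (if p.2 j then -1 else 1) * ((p.1 j).+1)%:Z.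

Definition sp_word (n : nat) (p : signed_perm n) : seq int :=
  [seq sp_entry p j | j <- enum 'I_n].

Definition alternating (t : seq int) : bool :=
  all (fun i : nat =>
    if odd i then nth 0 t i > nth 0 t i.+1 else nth 0 t i < nth 0 t i.+1)
    (iota 0 (size t).-1).

Definition is_snake (n : nat) (p : signed_perm n) : bool :=
  alternating (0 :: sp_word p).

(* alpha(pi); position j (0-based) corresponds to index j+1, so index j+1 is
   odd iff j is even. *)
Definition alpha (n : nat) (p : signed_perm n) : int :=
  \sum_(j < n)
    (if ~~ odd j then (if 0 < sp_entry p j then 1 else -1)
     else (if sp_entry p j < 0 then 1 else -1)).

(* A labeled path with n steps: steps j (true = u = (1,1), false = d = (1,-1))
   and labels j.  Labels are a priori in 'I_(n.+1); the height is always <= n. *)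
Definition labeled_path (n : nat) := ({ffun 'I_n -> bool} * {ffun 'I_n -> 'I_n.+1})%type.

Definition ycoord (n : nat) (st : {ffun 'I_n -> bool}) (m : nat) : int :=
  \sum_(i < n | (i < m)%N) (if st i then 1 else -1).

Definition step_height (n : nat) (st : {ffun 'I_n -> bool}) (j : 'I_n) : int :=
  Num.min (ycoord st j) (ycoord st j.+1).

Definition is_labeled_ballot_path (n : nat) (k : nat) (q : labeled_path n) : bool :=
  [&& [forall m : 'I_n.+1, 0 <= ycoord q.1 m],
      ycoord q.1 n == k%:Z &
      [forall j : 'I_n, (q.2 j)%:Z <= step_height q.1 j]].

(* Main.v *)
Require Import Defs.
From HB Require Import structures.
From mathcomp Require Import all_boot all_order all_algebra all_fingroup.
From mathcomp Require Import zify.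
Import Order.TTheory GRing.Theory Num.Theory.
Local Open Scope ring_scope.

Definition posr (a b : int) : bool := 0 < a + b.
Definition shft (x : int) : int := if 0 < x then x + 1 else if x < 0 then x - 1 else 0.
Definition sg1 (x : int) : int := if 0 < x then 1 else -1.
Definition sig (w : seq int) : int := \sum_(x <- w) sg1 x.
Definition ins (i : nat) (x : int) (l : seq int) := take i l ++ x :: drop i l.

Ltac ifl := rewrite ?/posr ?/shft ?/sg1 ?ltxx;
  repeat (match goal with |- context [if ?c then _ else _] => case: (boolP c) => ? end); try lia.

Lemma posr_shft a b : posr (shft a) (shft b) = posr a b.
Proof. rewrite /posr /shft; case: (ltrgt0P a) => Ha; case: (ltrgt0P b) => Hb; apply/idP/idP; lia. Qed.

Lemma sg1_shft a : sg1 (shft a) = sg1 a.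
Proof. rewrite /sg1 /shft; case: (ltrgt0P a) => Ha; try subst a; ifl. Qed.

Definition G (x0 : int) (w : seq int) (x : int) : nat :=
  \sum_(i < (size w).+1) path posr (shft x0) (ins i x (map shft w)).

Lemma path_shft x0 w : path posr (shft x0) (map shft w) = path posr x0 w.
Proof. by elim: w x0 => [|a w IH] x0 //=; rewrite posr_shft IH. Qed.

Lemma Grec x0 a w x : G x0 (a :: w) x =
  ((posr (shft x0) x && posr x (shft a) && path posr a w) + posr x0 a * G a w x)%N.
Proof.
rewrite /G /= big_ord_recl /= path_shft -andbA; congr (_ + _).
rewrite big_distrr /=; apply: eq_bigr => i _.
by rewrite /ins /= posr_shft; case: (posr x0 a); rewrite ?mul1n ?mul0n.
Qed.

Definition th (b : bool) (y : int) : int := if b then (if 0 < y then 1 else 0) else (if 0 <= y then 1 else 0).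
Definition sx (b : bool) : int := if b then -1 else 1.

Lemma arith1 x0 a (b : bool) : a != 0 -> posr x0 a ->
  (if posr (shft x0) (sx b) then if posr (sx b) (shft a) then 1 else 0 else 0) + th b a = sg1 a + th b x0.
Proof.
move=> Ha0 Hp; rewrite /th /sx /posr /shft /sg1 in Hp *.
case: b; case: (ltrgt0P x0) => H0; try subst x0; case: (ltrgt0P a) => Ha; try subst a;
 rewrite ?ltxx ?lexx; ifl.
Qed.

Lemma arith2 x0 a (b : bool) : a != 0 -> ~~ posr x0 a ->
  (if posr (shft x0) (sx b) then if posr (sx b) (shft a) then 1 else 0 else 0) = 0 :> int.
Proof.
move=> Ha0 Hp; rewrite /th /sx /posr /shft /sg1 in Hp *.
case: b; case: (ltrgt0P x0) => H0; try subst x0; case: (ltrgt0P a) => Ha; try subst a;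
 rewrite ?ltxx ?lexx; ifl.
Qed.

Lemma natbZ (c : bool) : ((c : nat)%:Z) = if c then 1 else 0.
Proof. by case: c. Qed.

Lemma natb3Z (c1 c2 c3 : bool) : ((c1 && c2 && c3 : nat)%:Z) =
  if c3 then (if c1 then if c2 then 1 else 0 else 0) else 0.
Proof. by case: c1; case: c2; case: c3. Qed.

Lemma G_val x0 w b : all (fun y => y != 0) w ->
  (G x0 w (sx b))%:Z = if path posr x0 w then sig w + th b x0 else 0.
Proof.
elim: w x0 => [|a w IH] x0 /=.
  move=> _; rewrite /G big_ord1 /ins /= andbT /sig big_nil add0r natbZ.
  rewrite /th /sx /posr /shft.
  case: b; case: (ltrgt0P x0) => H0; try subst x0; rewrite ?ltxx ?lexx; ifl.
case/andP=> Ha Hw; rewrite Grec PoszD PoszM natb3Z natbZ (IH _ Hw) /sig big_cons -/(sig w).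
case: (path posr a w); last first.
  by rewrite andbF mulr0 addr0.
rewrite andbT; case: (boolP (posr x0 a)) => Hp.
  have := arith1 x0 a b Ha Hp; lia.
rewrite (arith2 x0 a b Ha Hp); lia.
Qed.

Definition Qk (k : int) (w : seq int) : bool := path posr 0 w && (sig w == k).

Lemma sig_cat s t : sig (s ++ t) = sig s + sig t.
Proof. by rewrite /sig big_cat. Qed.

Lemma sig_map_shft w : sig (map shft w) = sig w.
Proof. by elim: w => [|a w IH]; rewrite /sig ?big_nil // !big_cons sg1_shft -!/(sig _) IH. Qed.

Lemma sig_ins i x w : sig (ins i x (map shft w)) = sg1 x + sig w.
Proof.
rewrite /ins sig_cat /sig big_cons -!/(sig _) addrCA -sig_cat cat_take_drop sig_map_shft //.
Qed.

Lemma ins_count w (k : int) : all (fun y => y != 0) w ->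
  (\sum_(i < (size w).+1) \sum_(b : bool) Qk k (ins i (sx b) (map shft w)))%N =
  ((Qk (k - 1)%R w) * absz k + (Qk (k + 1)%R w) * absz (k + 1)%R)%N.
Proof.
move=> Hw; rewrite exchange_big big_bool addnC.
have E : forall b, (\sum_(i < (size w).+1) Qk k (ins i (sx b) (map shft w)))%N =
   (((sg1 (sx b) + sig w)%R == k) * G 0 w (sx b))%N.
  move=> b; rewrite /G big_distrr /=; apply: eq_bigr => i _.
  by rewrite /Qk sig_ins (_ : 0 = shft 0) //; case: (_ == k); rewrite ?mul1n ?andbT ?andbF.
rewrite !E /=; apply/eqP; rewrite -eqz_nat !PoszD !PoszM !natbZ.
have := G_val 0 w true Hw; have := G_val 0 w false Hw.
rewrite /Qk /th /sx /sg1 /=.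
case: (path posr 0 w) => /= H1 H2; rewrite H1 H2 /=; last by rewrite !mulr0.
have : 0 <= sig w + 0 by rewrite -H2.
move: (sig w) => s Hs; apply/eqP; ifl.
Qed.

Definition wword n (s : 'S_n) (f : {ffun 'I_n -> bool}) : seq int :=
  [seq sx (f j) * ((s j).+1)%:Z | j <- enum 'I_n].

Arguments wword {n}.

Lemma size_wword n (s : 'S_n) f : size (wword s f) = n.
Proof. by rewrite size_map size_enum_ord. Qed.

Lemma nth_wword n (s : 'S_n) f (j : 'I_n) : nth 0 (wword s f) j = sx (f j) * ((s j).+1)%:Z.
Proof. by rewrite (nth_map j) ?size_enum_ord // nth_ord_enum. Qed.

Lemma wword_nz n (s : 'S_n) f : all (fun y => y != 0) (wword s f).
Proof. apply/allP => x /mapP [j _ ->]; rewrite /sx; case: (f j); lia. Qed.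

Lemma nth_ins (i : nat) x l j : (i <= size l)%N ->
  nth 0 (ins i x l) j = if (j < i)%N then nth 0 l j else if j == i then x else nth 0 l j.-1.
Proof.
move=> Hi; rewrite /ins nth_cat size_take_min (minn_idPl Hi).
case: ltnP => Hj; first by rewrite nth_take.
case: eqP => [->|Hne]; first by rewrite subnn.
have -> : (j - i = (j.-1 - i).+1)%N by lia.
by rewrite /= nth_drop; congr nth; lia.
Qed.

Definition insf n (i : 'I_n.+1) (b : bool) (f : {ffun 'I_n -> bool}) : {ffun 'I_n.+1 -> bool} :=
  [ffun j => if unlift i j is Some k then f k else b].
Arguments insf {n}.

Lemma shft_sx b (m : nat) : shft (sx b * (m.+1)%:Z) = sx b * (m.+2)%:Z.
Proof. rewrite /sx; case: b; ifl. Qed.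

Lemma wword_ins n (i : 'I_n.+1) b (s : 'S_n) f :
  wword (lift_perm i ord0 s) (insf i b f) = ins i (sx b) (map shft (wword s f)).
Proof.
have Hsz : size (ins i (sx b) (map shft (wword s f))) = n.+1.
  by rewrite /ins size_cat /= size_take_min size_drop size_map size_wword; lia.
apply: (@eq_from_nth _ 0); first by rewrite size_wword Hsz.
move=> j; rewrite size_wword => Hj.
have -> : j = nat_of_ord (Ordinal Hj) by [].
move: (Ordinal Hj) => j'; clear Hj j; rename j' into j; rewrite nth_wword nth_ins; last first.
  by rewrite size_map size_wword -ltnS.
case: (unliftP i j) => [k|] ->.
- rewrite lift_perm_lift ffunE liftK /= /bump leq0n add1n.
  have Hk : (k < n)%N by case: k.
  case: (leqP i k) => Hik.
  + rewrite (_ : (true + k = k.+1)%N) // (_ : (k.+1 < i)%N = false); last by lia.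
    rewrite (_ : (k.+1 == i) = false); last by lia.
    by rewrite (nth_map 0) ?size_wword // (nth_wword _ s f k) shft_sx.
  + rewrite (_ : (false + k = k)%N) // Hik.
    by rewrite (nth_map 0) ?size_wword // (nth_wword _ s f k) shft_sx.
- by rewrite lift_perm_id ffunE unlift_none ltnn eqxx /= mulr1.
Qed.

Lemma sum_perm_lift n (F : 'S_n.+1 -> nat) :
  (\sum_(s : 'S_n.+1) F s = \sum_(i : 'I_n.+1) \sum_(s : 'S_n) F (lift_perm i ord0 s))%N.
Proof.
rewrite (partition_big (fun s : 'S_n.+1 => s^-1%g ord0) predT) //=.
apply: eq_bigr => i0 _.
rewrite (eq_bigl (fun s : 'S_n.+1 => s i0 == ord0)); last first.
  move=> s /=; apply/eqP/eqP => [<-|<-]; by rewrite ?permKV ?permK.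
rewrite (reindex (lift_perm i0 ord0)); last first.
  pose ulsf i (s : 'S_n.+1) k := odflt k (unlift (s i) (s (lift i k))).
  have ulsfK i (s : 'S_n.+1) k: lift (s i) (ulsf i s k) = s (lift i k).
    rewrite /ulsf; have:= neq_lift i k.
    by rewrite -(can_eq (permK s)) => /unlift_some[] ? ? ->.
  have inj_ulsf: injective (ulsf i0 _).
    move=> s; apply: can_inj (ulsf (s i0) s^-1%g) _ => k'.
    by rewrite {1}/ulsf ulsfK !permK liftK.
  exists (fun s => perm (inj_ulsf s)) => [s _ | s].
    by apply/permP=> k'; rewrite permE /ulsf lift_perm_lift lift_perm_id liftK.
  move/(s _ =P _) => si0; apply/permP=> k.
  case: (unliftP i0 k) => [k'|] ->; rewrite ?lift_perm_id //.
  by rewrite lift_perm_lift -si0 permE ulsfK.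
by apply: eq_bigl => s; rewrite lift_perm_id eqxx.
Qed.

Lemma sum_ffun_ins n (i : 'I_n.+1) (F : {ffun 'I_n.+1 -> bool} -> nat) :
  (\sum_(f : {ffun 'I_n.+1 -> bool}) F f =
   \sum_(b : bool) \sum_(f : {ffun 'I_n -> bool}) F (insf i b f))%N.
Proof.
rewrite (pair_big predT predT (fun b f => F (insf i b f))) /=.
rewrite (reindex (fun p : bool * {ffun 'I_n -> bool} => insf i p.1 p.2)) //.
exists (fun f : {ffun 'I_n.+1 -> bool} => (f i, [ffun k => f (lift i k)])).
  move=> [b f] _ /=; congr pair; first by rewrite ffunE unlift_none.
  by apply/ffunP => k; rewrite !ffunE liftK.
move=> f _ /=; apply/ffunP => j; rewrite ffunE.
by case: (unliftP i j) => [k|] ->; rewrite ?liftK ?unlift_none ?ffunE.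
Qed.

Definition Snk n (k : int) : nat :=
  (\sum_(s : 'S_n) \sum_(f : {ffun 'I_n -> bool}) Qk k (wword s f))%N.

Lemma ins_count' n w (k : int) : size w = n -> all (fun y => y != 0) w ->
  (\sum_(i < n.+1) \sum_(b : bool) Qk k (ins i (sx b) (map shft w)))%N =
  ((Qk (k - 1)%R w) * absz k + (Qk (k + 1)%R w) * absz (k + 1)%R)%N.
Proof. move=> <-; exact: ins_count. Qed.

Lemma Snk_rec n k : Snk n.+1 k = (absz k * Snk n (k - 1)%R + absz (k + 1)%R * Snk n (k + 1)%R)%N.
Proof.
rewrite /Snk sum_perm_lift exchange_big /=.
rewrite !big_distrr -big_split /=; apply: eq_bigr => s _.
rewrite !big_distrr -big_split /=.
under eq_bigr => i _ do rewrite (sum_ffun_ins n i (fun f => Qk k (wword (lift_perm i ord0 s) f))) exchange_big /=.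
rewrite exchange_big /=; apply: eq_bigr => f _.
under eq_bigr => i _ do under eq_bigr => b _ do rewrite wword_ins.
rewrite (ins_count' n) ?size_wword ?wword_nz //.
by rewrite mulnC [(Qk _ _ * _)%N]mulnC.
Qed.

Lemma alt_path (pi w : seq int) : size pi = size w ->
  (forall j, nth 0 pi j = (if odd j then -1 else 1) * nth 0 w j) ->
  alternating (0 :: pi) = path posr 0 w.
Proof.
move=> Hs Hn; apply/allP/(pathP 0) => H i Hi.
- have := H i; rewrite mem_iota /= add0n Hs Hi => /(_ isT).
  case: i Hi => [|i] Hi /=; rewrite /posr.
    by rewrite Hn mul1r add0r.
  rewrite !Hn /=; case: (odd i) => /=; lia.
- rewrite mem_iota /= add0n Hs in Hi; have := H i Hi.
  case: i Hi => [|i] Hi /=; rewrite /posr.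
    by rewrite Hn mul1r add0r.
  rewrite !Hn /=; case: (odd i) => /=; lia.
Qed.

Definition xorpar n (f : {ffun 'I_n -> bool}) : {ffun 'I_n -> bool} :=
  [ffun j : 'I_n => f j (+) odd j].
Arguments xorpar {n}.

Lemma xorparK n : involutive (@xorpar n).
Proof. by move=> f; apply/ffunP => j; rewrite !ffunE addbK. Qed.

Lemma nth_sp_word n (p : signed_perm n) (j : 'I_n) : nth 0 (sp_word p) j = sp_entry p j.
Proof. by rewrite (nth_map j) ?size_enum_ord // nth_ord_enum. Qed.

Lemma snake_wword n (s : 'S_n) (f : {ffun 'I_n -> bool}) : is_snake (s, xorpar f) = path posr 0 (wword s f).
Proof.
rewrite /is_snake; apply: alt_path; first by rewrite size_map size_wword size_enum_ord.
move=> j; case: (ltnP j n) => Hj.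
  have -> : j = nat_of_ord (Ordinal Hj) by [].
  rewrite nth_sp_word nth_wword /sp_entry /= ffunE /sx.
  case: (f _); case: (odd _) => /=; lia.
rewrite !nth_default ?mulr0 // ?size_wword // size_map size_enum_ord //.
Qed.

Lemma alpha_wword n (s : 'S_n) (f : {ffun 'I_n -> bool}) : alpha (s, xorpar f) = sig (wword s f).
Proof.
rewrite /alpha /sig big_map big_enum /=; apply: eq_bigr => j _.
rewrite /sp_entry /= ffunE /sx /sg1.
case: (f j); case: (odd j) => /=; ifl.
Qed.

Lemma sum_xorpar n (F : {ffun 'I_n -> bool} -> nat) :
  (\sum_(f : {ffun 'I_n -> bool}) F f = \sum_(f : {ffun 'I_n -> bool}) F (xorpar f))%N.
Proof. by rewrite (reindex (@xorpar n)) //; exists xorpar => f _; rewrite xorparK. Qed.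

Lemma rhs_Snk n (k : int) :
  #|[set p : signed_perm n | is_snake p && (alpha p == k)]| = Snk n k.
Proof.
rewrite -sum1_card big_mkcond /=.
rewrite (eq_bigr (fun p : signed_perm n => nat_of_bool (is_snake p && (alpha p == k)))); last first.
  by move=> p _; rewrite inE; case: (_ && _).
transitivity (\sum_(s : 'S_n) \sum_(e : {ffun 'I_n -> bool})
   nat_of_bool (is_snake (s, e) && (alpha (s, e) == k)))%N.
  by rewrite pair_big /=; apply: eq_bigr => [[s e]].
rewrite /Snk; apply: eq_bigr => s _.
rewrite (sum_xorpar n); apply: eq_bigr => e _.
by rewrite snake_wword alpha_wword.
Qed.

Definition sb (b : bool) : int := if b then 1 else -1.

Lemma insf_widen n b (st : {ffun 'I_n -> bool}) (i : 'I_n) :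
  insf ord_max b st (widen_ord (leqnSn n) i) = st i.
Proof.
rewrite ffunE; have -> : widen_ord (leqnSn n) i = lift ord_max i.
  by apply: val_inj; rewrite /= /bump; case: i => i Hi /=; rewrite leqNgt Hi.
by rewrite liftK.
Qed.

Lemma insf_max n b (st : {ffun 'I_n -> bool}) : insf ord_max b st ord_max = b.
Proof. by rewrite ffunE unlift_none. Qed.

Lemma ycoord_ins n b (st : {ffun 'I_n -> bool}) (m : nat) :
  ycoord (insf ord_max b st) m =
  ycoord st m + (if (n < m)%N then sb b else 0).
Proof.
rewrite /ycoord big_mkcond big_ord_recr /= insf_max; congr (_ + _).
  by rewrite [RHS]big_mkcond; apply: eq_bigr => i _ /=; rewrite insf_widen.
Qed.

Lemma ycoord_le n (st : {ffun 'I_n -> bool}) m : 0 <= ycoord st m -> (absz (ycoord st m) <= n)%N.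
Proof.
move=> H; suff : ycoord st m <= n%:Z by lia.
rewrite /ycoord; apply: (le_trans (y := \sum_(i < n) (1:int))).
  rewrite big_mkcond; apply: ler_sum => i _; case: ifP => _ //; case: (st i) => //.
rewrite sumr_const card_ord; lia.
Qed.

Lemma ycoord_ge n (st : {ffun 'I_n -> bool}) m : (n <= m)%N -> ycoord st m = ycoord st n.
Proof. by move=> H; apply: eq_bigl => i; rewrite ltn_ord (leq_trans (ltn_ord i) H). Qed.

Lemma ballot_ins n b (st : {ffun 'I_n -> bool}) :
  [forall m : 'I_n.+2, 0 <= ycoord (insf ord_max b st) m] =
  [forall m : 'I_n.+1, 0 <= ycoord st m] && (0 <= ycoord st n + sb b).
Proof.
apply/forallP/andP => [H | [/forallP H Hn] m].
- split.
    apply/forallP => m; have := H (widen_ord (leqnSn _) m); rewrite ycoord_ins /=.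
    by rewrite (_ : (n < m)%N = false) ?addr0 //; have := ltn_ord m; lia.
  by move: (H ord_max); rewrite (ycoord_ins n b st) /= ltnSn (ycoord_ge n st n.+1).
- rewrite (ycoord_ins n b st); case: (ltnP n m) => Hm.
    by rewrite ycoord_ge // ltnW.
  by rewrite addr0; have := H (Ordinal (m := m) (n := n.+1) Hm).
Qed.

Lemma prod_ins n b (st : {ffun 'I_n -> bool}) :
  (\prod_(j < n.+1) (absz (step_height (insf ord_max b st) j)).+1 =
  \prod_(j < n) (absz (step_height st j)).+1 *
    (absz (Num.min (ycoord st n) (ycoord st n + sb b)%R)).+1)%N.
Proof.
rewrite big_ord_recr /=; congr (_ * _)%N.
  apply: eq_bigr => j _; rewrite /step_height !ycoord_ins /=.
  have Hj := ltn_ord j.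
  have -> : (n < j.+1)%N = false by apply/negbTE; rewrite -leqNgt.
  have -> : (n < j)%N = false by apply/negbTE; rewrite -leqNgt ltnW.
  by rewrite !addr0.
by rewrite /step_height !(ycoord_ins n b st) /= ltnn ltnSn addr0 (ycoord_ge n st n.+1).
Qed.

Definition Pk n (k : int) : nat :=
  (\sum_(st : {ffun 'I_n -> bool})
     ([forall m : 'I_n.+1, (0 <= ycoord st m)%R] && (ycoord st n == k)) *
     \prod_(j < n) (absz (step_height st j)).+1)%N.

Lemma arithP (Y k : int) (bl : bool) (pr : nat) (b : bool) : (bl -> 0 <= Y) ->
 (((bl && (0 <= Y + sb b)%R) && ((Y + sb b)%R == k)) * (pr * (absz (Num.min Y (Y + sb b)%R)).+1))%N
  = (absz (if b then k else k + 1)%R * ((bl && (Y == k - sb b)%R) * pr))%N.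
Proof.
case: bl => [/(_ isT) HY|_]; last by rewrite /= !mul0n muln0.
case: b; rewrite /sb /=.
- rewrite min_l; last by lia.
  case: (boolP (Y == k - 1)) => H.
    have -> : (0 <= Y + 1) && (Y + 1 == k) by apply/andP; split; lia.
    rewrite (_ : (absz Y).+1 = absz k); last by lia.
    by rewrite /= !mul1n; apply: mulnC.
  have -> : (Y + 1 == k) = false by apply/negbTE; apply: contraNN H => /eqP <-; rewrite addrK.
  by rewrite andbF !mul0n muln0.
- rewrite min_r; last by lia.
  case: (boolP (Y == k - -1)) => H.
    rewrite (_ : (Y + -1 == k) = true); last by lia.
    case: (boolP (0 <= Y + -1)) => H2.
      rewrite (_ : (absz (Y + -1)).+1 = absz (k + 1)); last by lia.
      by rewrite /= !mul1n; apply: mulnC.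
    by rewrite (_ : absz (k + 1) = 0%N) ?mul0n //; lia.
  have -> : (Y + -1 == k) = false by apply/negbTE; apply: contraNN H => /eqP <-; rewrite opprK addrNK.
  by rewrite andbF !mul0n muln0.
Qed.

Lemma Pk_rec n k : Pk n.+1 k = (absz k * Pk n (k - 1)%R + absz (k + 1)%R * Pk n (k + 1)%R)%N.
Proof.
rewrite /Pk (sum_ffun_ins n ord_max) big_bool /= !big_distrr /=.
congr (_ + _)%N; apply: eq_bigr => st _.
- rewrite ballot_ins (ycoord_ins n true st) ltnSn (ycoord_ge n st n.+1) // prod_ins.
  rewrite (arithP _ _ _ _ true) //.
  by move/forallP => H; apply: (H ord_max).
- rewrite ballot_ins (ycoord_ins n false st) ltnSn (ycoord_ge n st n.+1) // prod_ins.
  rewrite (arithP _ _ _ _ false) //.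
  by move/forallP => H; apply: (H ord_max).
Qed.

Lemma Snk0 k : Snk 0 k = (0 == k).
Proof.
rewrite /Snk (eq_bigr (fun _ => nat_of_bool (0 == k))); last first.
  move=> s _; rewrite (eq_bigr (fun _ => nat_of_bool (0 == k))).
    by rewrite sum_nat_const card_ffun card_ord card_bool /= mul1n.
  move=> f _; have : size (wword s f) = 0%N by rewrite size_wword.
  by move/size0nil => ->; rewrite /Qk /sig big_nil.
by rewrite sum_nat_const card_Sn /= mul1n.
Qed.

Lemma Pk0 k : Pk 0 k = (0 == k).
Proof.
rewrite /Pk (eq_bigr (fun _ => nat_of_bool (0 == k))).
  by rewrite sum_nat_const card_ffun card_ord card_bool /= mul1n.
move=> st _; rewrite big_ord0 muln1.
have Y : forall m, ycoord st m = 0 by move=> m; rewrite /ycoord big_pred0 // => -[].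
rewrite Y; have -> : [forall m : 'I_1, (0 <= ycoord st m)%R] by apply/forallP => m; rewrite Y.
by [].
Qed.

Lemma Snk_Pk n k : Snk n k = Pk n k.
Proof.
elim: n k => [|n IH] k; first by rewrite Snk0 Pk0.
by rewrite Snk_rec Pk_rec !IH.
Qed.

Lemma card_le_ord m (c : nat) : (c < m)%N -> #|[pred x : 'I_m | (x <= c)%N]| = c.+1.
Proof.
move=> H; rewrite -sum1_card.
transitivity (\sum_(i < m | (i < c.+1)%N) 1)%N; first by apply: eq_bigl.
by rewrite -(big_ord_widen _ (fun _ => 1%N) H) sum1_card card_ord.
Qed.

Lemma height_bounds n (st : {ffun 'I_n -> bool}) (j : 'I_n) :
  [forall m : 'I_n.+1, (0 <= ycoord st m)%R] ->
  (0 <= step_height st j)%R /\ (absz (step_height st j) <= n)%N.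
Proof.
move/forallP => Hb.
have h1 := Hb (widen_ord (leqnSn n) j).
have h2 := Hb (lift ord0 j).
rewrite /= in h1 h2.
have h3 := ycoord_le n st j h1.
rewrite /step_height minEle; case: ifP => _; split => //.
by apply: ycoord_le; move: h2; rewrite /bump leq0n add1n.
Qed.

Lemma lhs_Pk n (k : nat) :
  #|[set q : labeled_path n | is_labeled_ballot_path k q]| = Pk n k%:Z.
Proof.
rewrite -sum1_card big_mkcond /=.
rewrite (eq_bigr (fun q : labeled_path n => nat_of_bool (is_labeled_ballot_path k q))); last first.
  by move=> q _; rewrite inE; case: (is_labeled_ballot_path _ _).
transitivity (\sum_(st : {ffun 'I_n -> bool}) \sum_(lab : {ffun 'I_n -> 'I_n.+1})
   nat_of_bool (is_labeled_ballot_path k (st, lab)))%N.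
  by rewrite pair_big /=; apply: eq_bigr => [[s e]].
rewrite /Pk; apply: eq_bigr => st _.
rewrite /is_labeled_ballot_path /=.
case: (boolP [forall m : 'I_n.+1, (0 <= ycoord st m)%R]) => Hb /=; last first.
  by rewrite mul0n; apply: big1.
case: (boolP (ycoord st n == k%:Z)) => Hy /=; last first.
  by rewrite mul0n; apply: big1.
rewrite mul1n.
transitivity #|[pred lab : {ffun 'I_n -> 'I_n.+1} | [forall j : 'I_n, ((lab j)%:Z <= step_height st j)%R]]|.
  symmetry; rewrite -sum1_card big_mkcond /=; apply: eq_big => // lab _; rewrite inE; by case: [forall _, _].
pose F := fun j : 'I_n => [pred x : 'I_n.+1 | ((x : nat)%:Z <= step_height st j)%R].
rewrite (@eq_card _ _ (family F)); last first.
  by move=> lab; rewrite !inE.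
have := card_family F; rewrite foldrE big_map big_enum /= => E.
transitivity (\prod_(i in 'I_n) #|F i|)%N; first exact: E.
apply: eq_big => // j _.
have [H0 H1] := height_bounds n st j Hb.
rewrite -(card_le_ord (n.+1) (absz (step_height st j))) //.
by apply: eq_card => x; rewrite !inE; lia.
Qed.

Local Close Scope ring_scope.

Theorem theorem4p5 (n k : nat) (hk : (k <= n)%N) :
  #|[set q : labeled_path n | is_labeled_ballot_path k q]| =
  #|[set p : signed_perm n | is_snake p && (alpha p == k%:Z)%R]|.
Proof.
by rewrite lhs_Pk rhs_Snk Snk_Pk.
Qed.
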